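(* Let $N\le V$ be a subspace such that there is an $X\in\mathcal G$ with $X\le N$ and $\dim(N/X)=1$, and let $\mathcal G\langle N]:=\{E\le V\mid E\le N \text{ and } \dim(N/E)=1\}$ (the top with carrier $N$). Then: (1) $\mathcal G\langle N]\subseteq\mathcal G$; (2) any two distinct elements $E,E'\in\mathcal G\langle N]$ are adjacent; (3) two adjacent elements $E,E'\in\mathcal G$ both belong to $\mathcal G\langle N]$ if and only if $E+E'=N$.
   Context: $K$ is a (not necessarily commutative) field and $V$ is a left vector space over $K$ of arbitrary (possibly infinite) dimension with $\dim V>2$. $\mathcal G:=\{X\le V\mid X\cong V/X\}$ is the set of subspaces of $V$ isomorphic (as $K$-vector spaces) to their quotient space, assumed nonempty. Dimensions are vector space dimensions. Two elements $X,Y\in\mathcal G$ are called adjacent if $\dim((X+Y)/X)=\dim((X+Y)/Y)=1$, equivalently $\dim(X/(X\cap Y))=\dim(Y/(X\cap Y))=1$. *)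

(* Defs.v *)
From HB Require Import structures.
From mathcomp Require Import all_boot all_order all_algebra.
Set Implicit Arguments. Unset Strict Implicit. Unset Printing Implicit Defensive.
Import GRing.Theory.
Local Open Scope ring_scope.

Definition division_ring (K : unitRingType) : Prop :=
  forall x : K, x != 0 -> x \is a GRing.unit.

Section Subspaces.
Variables (K : unitRingType) (V : lmodType K).

Definition subspace (X : V -> Prop) : Prop :=
  X 0 /\ forall (a : K) (x y : V), X x -> X y -> X (a *: x + y).

Definition subsp (X Y : V -> Prop) : Prop := forall v, X v -> Y v.

Definition seteq (X Y : V -> Prop) : Prop := forall v, X v <-> Y v.

Definition sumsp (X Y : V -> Prop) : V -> Prop :=
  fun v => exists x y, X x /\ Y y /\ v = x + y.

(* codim1 B A  :<->  B <= A and dim (A/B) = 1, i.e. A/B is spanned by the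
   class of a single vector v of A not in B. *)
Definition codim1 (B A : V -> Prop) : Prop :=
  subsp B A /\
  exists v, A v /\ ~ B v /\
    forall w, A w -> exists (a : K) (b : V), B b /\ w = a *: v + b.

(* X is isomorphic (as K-space) to V/X: there is a K-linear bijection
   X -> V/X, presented by a linear lift g : X -> V of it
   (x |-> g x + X). *)
Definition iso_quot (X : V -> Prop) : Prop :=
  exists g : V -> V,
    (forall (a : K) (x y : V), X x -> X y -> g (a *: x + y) = a *: g x + g y)
    /\ (forall x, X x -> X (g x) -> x = 0)
    /\ (forall v, exists x, X x /\ X (v - g x)).

Definition inG (X : V -> Prop) : Prop := subspace X /\ iso_quot X.

Definition adjacent (X Y : V -> Prop) : Prop :=
  codim1 X (sumsp X Y) /\ codim1 Y (sumsp X Y).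

Definition dim_gt2 : Prop :=
  exists u v w : V, forall a b c : K,
    a *: u + b *: v + c *: w = 0 -> a = 0 /\ b = 0 /\ c = 0.

End Subspaces.

(* Main.v *)
From HB Require Import structures.
Require Import Defs.
From mathcomp Require Import all_boot all_order all_algebra.
From mathcomp Require Import boolp classical_sets.
Set Implicit Arguments. Unset Strict Implicit. Unset Printing Implicit Defensive.
Import GRing.Theory.
Local Open Scope ring_scope.

Lemma z1 (V : zmodType) (w p q : V) : w - (w + (p - q) - p) = q.
Proof. by rewrite opprB opprD opprB addrCA addNKr addrC subrK. Qed.

Lemma z2 (V : zmodType) (v p q : V) : (v - p) - (v - q) = q - p.
Proof. by rewrite opprB addrC addrA subrK. Qed.
Lemma z3 (V : zmodType) (a b p q : V) : (a + b) - (p + q) = (a - p) + (b - q).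
Proof. by rewrite opprD addrACA. Qed.

Lemma z4 (V : zmodType) (y p q : V) : y + (p - q) = (y - q) + p.
Proof. by rewrite -addrA [- q + p]addrC. Qed.

Section Aux.
Variables (K : unitRingType) (hK : division_ring K) (V : lmodType K).
Implicit Types (X A B S H N : V -> Prop).

Lemma sp0 X : subspace X -> X 0. Proof. by case. Qed.
Lemma spL X a x y : subspace X -> X x -> X y -> X (a *: x + y).
Proof. by case=> _ h; apply: h. Qed.
Lemma spD X x y : subspace X -> X x -> X y -> X (x + y).
Proof. by move=> sX hx hy; have := spL 1 sX hx hy; rewrite scale1r. Qed.
Lemma spZ X a x : subspace X -> X x -> X (a *: x).
Proof. by move=> sX hx; have := spL a sX hx (sp0 sX); rewrite addr0. Qed.
Lemma spN X x : subspace X -> X x -> X (- x).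
Proof. by move=> sX hx; have := spZ (-1) sX hx; rewrite scaleN1r. Qed.
Lemma spB X x y : subspace X -> X x -> X y -> X (x - y).
Proof. by move=> sX hx hy; apply: spD => //; apply: spN. Qed.

Lemma unitK (a : K) : a != 0 -> a^-1 * a = 1.
Proof. by move=> /hK; apply: mulVr. Qed.

Lemma scaleK (a : K) (v : V) : a != 0 -> a^-1 *: (a *: v) = v.
Proof. by move=> ha; rewrite scalerA unitK // scale1r. Qed.

Lemma coeff A N z : subspace A -> codim1 A N -> N z -> ~ A z ->
  forall y, N y -> exists a, A (y - a *: z).
Proof.
move=> sA [sAN [v [Nv [nAv hv]]]] Nz nAz y Ny.
have [a [b [Ab ez]]] := hv _ Nz.
have [c [b' [Ab' ey]]] := hv _ Ny.
have a0 : a != 0.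
  apply/negP => /eqP a0; apply: nAz; by rewrite ez a0 scale0r add0r.
exists (c * a^-1).
have -> : y - (c * a^-1) *: z = b' - (c * a^-1) *: b.
  rewrite ey ez scalerDr scalerA -mulrA unitK // mulr1.
  by rewrite opprD addrACA subrr add0r.
by apply: spB => //; apply: spZ.
Qed.

Lemma codim1_sub A B N : subspace A -> subspace B -> codim1 A N -> codim1 B N ->
  subsp A B -> subsp B A.
Proof.
move=> sA sB cA cB AB b Bb; apply/not_notP => nAb.
have [_ [v [Nv [nBv _]]]] := cB.
have [a Ha] := coeff sA cA (cB.1 _ Bb) nAb Nv.
apply: nBv; have -> : v = (v - a *: b) + a *: b by rewrite subrK.
by apply: spD => //; [apply: AB | apply: spZ].
Qed.

Lemma hyperplane S u : subspace S -> ~ S u ->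
  exists H, subspace H /\ subsp S H /\ ~ H u /\ forall v, exists a, H (v - a *: u).
Proof.
move=> sS nSu.
pose P := fun H : set V => ~ H u /\
  (forall a x y, H x -> H y -> H (a *: x + y)) /\ ((exists z, H z) -> subsp S H).
have [|A [[nAu [clA neA]] maxA]] := @Zorn_bigcup V P.
  move=> F FP tot; split; [|split].
  - by case=> X FX Xu; have [] := FP _ FX.
  - move=> a x y [X1 F1 h1] [X2 F2 h2].
    have [s12|s21] := tot _ _ F1 F2.
    + exists X2 => //; have [_ [cl _]] := FP _ F2; apply: cl => //; exact: s12.
    + exists X1 => //; have [_ [cl _]] := FP _ F1; apply: cl => //; exact: s21.
  - case=> z [X FX Xz] w Sw; exists X => //.
    by have [_ [_ hS]] := FP _ FX; apply: hS => //; exists z.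
have SA : subsp S A.
  apply: neA; apply/not_notP => nA.
  have A0 : A = set0 by apply/seteqP; split => // z Az; apply: nA; exists z.
  apply: (maxA S); last first.
    split => //; split; first by case: sS => _ h; apply: h.
    by move=> _ z.
  split; first by rewrite A0 => z.
  move=> h; have := h 0 (sp0 sS); rewrite A0; by [].
have sA : subspace A by split; [apply: SA; apply: sp0 | exact: clA].
exists A; split => //; split => //; split => // v.
apply/not_notP => nv.
pose B := fun z => exists a h, A h /\ z = a *: v + h.
apply: (maxA B).
  split; first by move=> z Az; exists 0, z; rewrite scale0r add0r.
  move=> BA; have : B v by exists 1, 0; rewrite scale1r addr0; split => //; exact: sp0.
  move=> /BA Av; apply: nv; exists 0; by rewrite scale0r subr0.
split; [|split].
- case=> a [h [Ah ea]].
  have [/eqP a0|a0] := boolP (a == 0).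
    by apply: nAu; rewrite ea a0 scale0r add0r.
  apply: nv; exists a^-1.
  have -> : v - a^-1 *: u = - (a^-1 *: h).
    by rewrite ea scalerDr scaleK // opprD addrA subrr add0r.
  by apply: spN => //; apply: spZ.
- move=> c x y [a [h [Ah ->]]] [b [h' [Ah' ->]]].
  exists (c * a + b), (c *: h + h'); split; first by apply: clA.
  by rewrite scalerDr scalerDl scalerA addrACA.
- move=> _ w Sw; exists 0, w; rewrite scale0r add0r; split => //; exact: SA.
Qed.

Lemma part1 X N E : inG X -> codim1 X N -> subspace E -> codim1 E N -> inG E.
Proof.
move=> [sX [g [glin [ginj gsurj]]]] cX sE cE.
have [XE|] := pselect (forall y, X y -> E y).
  have EX := codim1_sub sX sE cX cE XE.
  split => //; exists g; split; [|split].
  - by move=> a x y /EX hx /EX hy; apply: glin.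
  - by move=> x /EX hx /EX hgx; apply: ginj.
  - by move=> v; have [x [hx hvx]] := gsurj v; exists x; split; apply: XE.
move=> /existsNP[x] /not_implyP[Xx nEx].
have [e [Ee nXe]] : exists e, E e /\ ~ X e.
  apply/not_notP => h; apply: nEx.
  have EX : subsp E X by move=> z Ez; apply/not_notP => nz; apply: h; exists z.
  exact: (codim1_sub sE sX cE cX EX).
have Nx := cX.1 _ Xx; have Ne := cE.1 _ Ee.
pose d := e - x.
pose S := fun v => exists w a, E w /\ X w /\ v = w + a *: (x - e).
have sS : subspace S.
  rewrite /S; split; first by exists 0, 0; rewrite scale0r addr0; split; [exact: sp0 | split; [exact: sp0 | by []]].
  move=> c v v' [w [a [Ew [Xw ->]]]] [w' [a' [Ew' [Xw' ->]]]].
  exists (c *: w + w'), (c * a + a'); split; first exact: spL.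
  split; first exact: spL.
  by rewrite scalerDr scalerDl scalerA addrACA.
have nSx : ~ S x.
  case=> w [a [Ew [Xw ex]]].
  have [/eqP a0|a0] := boolP (a == 0).
    by apply: nEx; rewrite ex a0 scale0r addr0.
  apply: nXe.
  have ae : a *: e = w - (1 - a) *: x.
    rewrite scalerBl scale1r [X in w - (X - _)]ex scalerBr.
    by rewrite z1.
  rewrite -(scaleK e a0) ae; apply: spZ => //; apply: spB => //; exact: spZ.
have [H [sH [SH [nHx hH]]]] := hyperplane sS nSx.
have [f hf] := choice hH.
have funiq : forall v a, H (v - a *: x) -> f v = a.
  move=> v a hv; apply/not_notP => ne; apply: nHx.
  have hd : H ((a - f v) *: x).
    have -> : (a - f v) *: x = (v - f v *: x) - (v - a *: x) by rewrite scalerBl z2.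
    by apply: spB.
  have nz : a - f v != 0 by rewrite subr_eq0; apply/eqP => h; apply: ne.
  by rewrite -(scaleK x nz); apply: spZ.
have flin : forall c v w, f (c *: v + w) = c * f v + f w.
  move=> c v w; apply: funiq.
  have -> : c *: v + w - (c * f v + f w) *: x = c *: (v - f v *: x) + (w - f w *: x).
    by rewrite scalerDl -scalerA scalerBr z3.
  by apply: spL.
have f0 : f 0 = 0 by apply: funiq; rewrite scale0r subr0; exact: sp0.
have fN : forall v, f (- v) = - f v.
  by move=> v; have := flin (-1) v 0; rewrite addr0 f0 addr0 scaleN1r mulN1r.
have fx : f x = 1 by apply: funiq; rewrite scale1r subrr; exact: sp0.
have Hxe : H (x - e).
  by apply: SH; exists 0, 1; rewrite scale1r add0r; split; [exact: sp0|split; [exact: sp0|]].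
have Hd : H (e - x) by rewrite -opprB; apply: spN.
have fe : f e = 1 by apply: funiq; rewrite scale1r.
have fd : f (e - x) = 0 by apply: funiq; rewrite scale0r subr0.
have fd' : f (- (e - x)) = 0 by rewrite fN fd oppr0.
have fW : forall w, E w -> X w -> f w = 0.
  move=> w Ew Xw; apply: funiq; rewrite scale0r subr0; apply: SH.
  by exists w, 0; rewrite scale0r addr0.
pose tau := fun (d0 v : V) => v + f v *: d0.
have taulin : forall d0 c v w, tau d0 (c *: v + w) = c *: tau d0 v + tau d0 w.
  by move=> d0 c v w; rewrite /tau flin scalerDl -scalerA scalerDr addrACA.
have ftau : forall d0 v, f d0 = 0 -> f (tau d0 v) = f v.
  by move=> d0 v h; rewrite /tau addrC flin h mulr0 add0r.
have tauK : forall d0 v, f d0 = 0 -> tau d0 (tau (-d0) v) = v.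
  move=> d0 v h; rewrite {1}/tau ftau; last by rewrite fN h oppr0.
  by rewrite /tau scalerN subrK.
pose sig := tau (e - x); pose sig' := tau (- (e - x)).
have ss' : forall v, sig (sig' v) = v by move=> v; apply: tauK.
have s's : forall v, sig' (sig v) = v.
  by move=> v; rewrite /sig' /sig -{2}(opprK (e - x)); apply: tauK.
have sig0 : sig 0 = 0 by rewrite /sig /tau f0 scale0r addr0.
have sigB : forall v w, sig (v - w) = sig v - sig w.
  move=> v w; have h := taulin (e - x) (-1) w v.
  rewrite !scaleN1r in h.
  by rewrite /sig [v - w]addrC h addrC.
have sig'lin : forall c v w, sig' (c *: v + w) = c *: sig' v + sig' w.
  by move=> c v w; apply: taulin.
have sigX : forall y, X y -> E (sig y).
  move=> y Xy; have [a ha] := coeff sE cE Nx nEx (cX.1 _ Xy).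
  have hX : X (y - a *: x) by apply: spB => //; exact: spZ.
  have fy : f y = a.
    have -> : y = a *: x + (y - a *: x) by rewrite addrC subrK.
    by rewrite flin fx mulr1 fW // addr0.
  rewrite /sig /tau fy.
  have -> : y + a *: (e - x) = (y - a *: x) + a *: e.
    by rewrite scalerBr z4.
  by apply: spD => //; exact: spZ.
have sigE : forall z, E z -> X (sig' z).
  move=> z Ez; have [a ha] := coeff sX cX Ne nXe (cE.1 _ Ez).
  have hE : E (z - a *: e) by apply: spB => //; exact: spZ.
  have fz : f z = a.
    have -> : z = a *: e + (z - a *: e) by rewrite addrC subrK.
    by rewrite flin fe mulr1 fW // addr0.
  rewrite /sig' /tau fz.
  have -> : z + a *: - (e - x) = (z - a *: e) + a *: x.
    by rewrite scalerN scalerBr opprB z4.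
  by apply: spD => //; exact: spZ.
split => //; exists (fun v => sig (g (sig' v))); split; [|split].
- move=> a y z Ey Ez /=.
  rewrite sig'lin glin; try exact: sigE.
  by rewrite /sig taulin.
- move=> z Ez /= hE.
  have hX : X (g (sig' z)) by rewrite -(s's (g (sig' z))); apply: sigE.
  have := ginj _ (sigE _ Ez) hX => h0.
  by rewrite -(ss' z) h0 sig0.
- move=> v; have [y [Xy hy]] := gsurj (sig' v).
  exists (sig y); split; first exact: sigX.
  by rewrite s's -{1}(ss' v) -sigB; apply: sigX.
Qed.

Lemma codim1_sum A B N : subspace A -> subspace B -> codim1 A N -> subsp B N ->
  forall b, B b -> ~ A b -> codim1 A (sumsp A B).
Proof.
move=> sA sB cA BN b Bb nAb; split.
  by move=> y Ay; exists y, 0; rewrite addr0; split => //; split => //; exact: sp0.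
exists b; split; first by exists 0, b; rewrite add0r; split => //; exact: sp0.
split => // w [y [z [Ay [Bz ->]]]].
have [a ha] := coeff sA cA (BN _ Bb) nAb (BN _ Bz).
exists a, (y + (z - a *: b)); split; first exact: spD.
by rewrite addrCA [a *: b + _]addrC subrK.
Qed.

Lemma codim1_eq A N N' : seteq N N' -> codim1 A N -> codim1 A N'.
Proof.
move=> eq [AN [v [Nv [nAv hv]]]]; split; first by move=> y /AN /eq.
exists v; split; first exact/eq.
by split => // w /eq; apply: hv.
Qed.

Lemma sumspC A B : seteq (sumsp A B) (sumsp B A).
Proof.
by move=> v; split => -[x [y [hx [hy ->]]]]; exists y, x; rewrite addrC.
Qed.

Lemma distinct A B N : subspace A -> subspace B -> codim1 A N -> codim1 B N ->
  ~ seteq A B -> exists b, B b /\ ~ A b.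
Proof.
move=> sA sB cA cB neq; apply/not_notP => h; apply: neq.
have BA : subsp B A by move=> z Bz; apply/not_notP => nz; apply: h; exists z.
have AB := codim1_sub sB sA cB cA BA.
by move=> v; split; [apply: AB | apply: BA].
Qed.
End Aux.

Theorem lemma2p2 (K : unitRingType) (hK : division_ring K) (V : lmodType K)
  (hdim : dim_gt2 V) (hGne : exists X : V -> Prop, inG X)
  (N : V -> Prop) (hN : subspace N)
  (hX : exists X : V -> Prop, inG X /\ codim1 X N) :
  (forall E : V -> Prop, subspace E -> codim1 E N -> inG E)
  /\ (forall E E' : V -> Prop, subspace E -> subspace E' ->
        codim1 E N -> codim1 E' N -> ~ seteq E E' -> adjacent E E')
  /\ (forall E E' : V -> Prop, inG E -> inG E' -> adjacent E E' ->
        ((codim1 E N /\ codim1 E' N) <-> seteq (sumsp E E') N)).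
Proof.
have [X [GX cX]] := hX.
split; first by move=> E sE cE; exact: (part1 hK GX cX sE cE).
split.
  move=> E E' sE sE' cE cE' neq.
  have [e' [E'e' nEe']] := distinct hK sE sE' cE cE' neq.
  have [e [Ee nE'e]] : exists e, E e /\ ~ E' e.
    apply: (distinct hK sE' sE cE' cE) => h; apply: neq => v; split => /h //.
  split; first exact: (codim1_sum hK sE sE' cE cE'.1 E'e' nEe').
  apply: (codim1_eq (sumspC E' E)).
  exact: (codim1_sum hK sE' sE cE' cE.1 Ee nE'e).
move=> E E' [sE _] [sE' _] adj; split.
  move=> [cE cE'] v; split.
    by move=> [x [y [hx [hy ->]]]]; apply: spD => //; [exact: cE.1 | exact: cE'.1].
  move=> Nv.
  have [_ [u [[x [y [hx [hy eu]]]] [nEu _]]]] := adj.1.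
  have nEy : ~ E y.
    by move=> Ey; apply: nEu; rewrite eu; apply: spD.
  have [a ha] := coeff hK sE cE (cE'.1 _ hy) nEy Nv.
  exists (v - a *: y), (a *: y); split => //; split; first exact: spZ.
  by rewrite subrK.
move=> eq; split; [exact: (codim1_eq eq adj.1) | exact: (codim1_eq eq adj.2)].
Qed.
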